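(* Let $X$ be a real Banach space and $T:X\rightrightarrows X^*$ maximal monotone. Then $$D\big(\delta_{D(T)}^*\big)\subseteq 0^+\big(\mathrm{cl}_{w*}\mathrm{conv}\,R(T)\big),\qquad D\big(\delta_{R(T)}^*\big)\cap X\subseteq 0^+\big(\mathrm{cl}\,\mathrm{conv}\,D(T)\big),$$ where $\delta_{D(T)}^*:X^*\to\mathbb{R}\cup\{\pm\infty\}$, $\delta_{D(T)}^*(u^* )=\sup_{x\in D(T)}\langle x,u^*\rangle$, and $\delta_{R(T)}^*:X^{**}\to\mathbb{R}\cup\{\pm\infty\}$, $\delta_{R(T)}^*(u^{**})=\sup_{x^*\in R(T)}\langle u^{**},x^*\rangle$.
   Context: $X$ is identified with its canonical image in $X^{**}$. An operator $T:X\rightrightarrows X^*$ is a subset of $X\times X^*$ with domain $D(T)$ (its projection onto $X$) and range $R(T)$ (its projection onto $X^*$); $T$ is monotone if $\langle x-y,x^*-y^*\rangle\geq0$ for all $(x,x^* ),(y,y^* )\in T$, and maximal monotone if it is monotone and not properly contained in another monotone operator. For a function $f$, $D(f)=\{z\;|\;f(z)<\infty\}$. The recession cone of a set $C$ is $0^+C=\{u\;|\;x+\lambda u\in C\ \forall x\in C,\ \forall\lambda\geq0\}$. $\mathrm{cl}$ is norm closure in $X$, $\mathrm{cl}_{w*}$ weak-$*$ closure in $X^*$, $\mathrm{conv}$ convex hull. *)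

(* Defs.v *)
From HB Require Import structures.
From mathcomp Require Import all_boot all_order all_algebra.
From mathcomp Require Import all_classical all_reals all_analysis.
Set Implicit Arguments. Unset Strict Implicit. Unset Printing Implicit Defensive.
Import Order.TTheory GRing.Theory Num.Theory.
Import numFieldNormedType.Exports.
Local Open Scope classical_set_scope.
Local Open Scope ring_scope.

Section Defs.
Context {R : realType} {X : normedModType R}.

(* elements of the topological dual X^* : continuous linear functionals,
   represented by their underlying functions X -> R *)
Definition dual_elt (f : X -> R) : Prop :=
  (forall (a : R) (x y : X), f (a *: x + y) = a * f x + f y) /\ continuous f.

(* an operator X ⇉ X^* is a subset of X × X^* *)
Definition is_operator (T : set (X * (X -> R))) : Prop :=
  forall p, T p -> dual_elt p.2.

Definition monotone_op (T : set (X * (X -> R))) : Prop :=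
  forall p q, T p -> T q -> 0 <= p.2 (p.1 - q.1) - q.2 (p.1 - q.1).

Definition maximal_monotone (T : set (X * (X -> R))) : Prop :=
  [/\ is_operator T, monotone_op T &
      forall S, is_operator S -> monotone_op S -> T `<=` S -> S = T].

Definition dom_op (T : set (X * (X -> R))) : set X :=
  [set x | exists f, T (x, f)].
Definition ran_op (T : set (X * (X -> R))) : set (X -> R) :=
  [set f | exists x, T (x, f)].

Definition conv_hull (A : set X) : set X :=
  [set z | exists (n : nat) (w : 'I_n -> R) (a : 'I_n -> X),
     [/\ forall i, 0 <= w i, \sum_(i < n) w i = 1, forall i, A (a i)
       & z = \sum_(i < n) w i *: a i]].

Definition conv_dual (A : set (X -> R)) : set (X -> R) :=
  [set g | exists (n : nat) (w : 'I_n -> R) (a : 'I_n -> X -> R),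
     [/\ forall i, 0 <= w i, \sum_(i < n) w i = 1, forall i, A (a i)
       & g = fun z => \sum_(i < n) w i * a i z]].

(* weak-* closure in X^*: closure for the topology sigma(X^*, X), whose
   basic neighbourhoods of f are {g | |g x_i - f x_i| < e, i < n} *)
Definition wstar_closure (A : set (X -> R)) : set (X -> R) :=
  [set f | dual_elt f /\
     forall (n : nat) (xs : 'I_n -> X) (e : R), 0 < e ->
       exists g, A g /\ forall i, `|g (xs i) - f (xs i)| < e].

Definition norm_closure (A : set X) : set X := closure A.

Definition rec_cone (C : set X) : set X :=
  [set u | forall x, C x -> forall l : R, 0 <= l -> C (x + l *: u)].
Definition rec_cone_dual (C : set (X -> R)) : set (X -> R) :=
  [set u | forall x, C x -> forall l : R, 0 <= l -> C (fun z => x z + l * u z)].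

Definition supp_dom (T : set (X * (X -> R))) (u : X -> R) : \bar R :=
  ereal_sup [set (u x)%:E | x in dom_op T].
(* delta^*_{R(T)} evaluated at the canonical image of u in X^** *)
Definition supp_ran (T : set (X * (X -> R))) (u : X) : \bar R :=
  ereal_sup [set (f u)%:E | f in ran_op T].

End Defs.

(* Main.v *)
Require Import Defs.
From HB Require Import structures.
From mathcomp Require Import all_boot all_order all_algebra.
From mathcomp Require Import all_classical all_reals all_analysis.
From mathcomp Require Import ring lra.
Set Implicit Arguments. Unset Strict Implicit. Unset Printing Implicit Defensive.
Import Order.TTheory GRing.Theory Num.Theory.
Import numFieldNormedType.Exports.
Local Open Scope classical_set_scope.
Local Open Scope ring_scope.

Section HBsec.
Context {R : realType} {V : lmodType R} (p : V -> R).
Hypothesis p_add : forall x y, p (x + y) <= p x + p y.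
Hypothesis p_hom : forall (a : R) x, 0 < a -> p (a *: x) = a * p x.

Record pext := PExt { pD : set V ; pf : V -> R }.

Definition good (t : pext) := [/\ pD t 0,
  (forall a x y, pD t x -> pD t y -> pD t (a *: x + y)),
  (forall a x y, pD t x -> pD t y -> pf t (a *: x + y) = a * pf t x + pf t y) &
  (forall x, pD t x -> pf t x <= p x)].

Definition extends (t s : pext) :=
  pD t `<=` pD s /\ forall x, pD t x -> pf s x = pf t x.

Lemma good_f0 t : good t -> pf t 0 = 0.
Proof.
case=> D0 _ L _; have := L 1 0 0 D0 D0.
rewrite scale1r addr0 mul1r => h; lra.
Qed.

Lemma good_scale t a x : good t -> pD t x -> pf t (a *: x) = a * pf t x.
Proof.
move=> g Dx; case: (g) => D0 _ L _.
by have := L a x 0 Dx D0; rewrite addr0 good_f0 // addr0.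
Qed.

Lemma good_opp t x : good t -> pD t x -> pD t (- x).
Proof.
by move=> [D0 C _ _] Dx; have := C (-1) x 0 Dx D0; rewrite addr0 scaleN1r.
Qed.

Lemma good_addD t x y : good t -> pD t x -> pD t y -> pD t (x + y).
Proof. by move=> [D0 C _ _] Dx Dy; have := C 1 x y Dx Dy; rewrite scale1r. Qed.

Lemma good_add t x y : good t -> pD t x -> pD t y -> pf t (x + y) = pf t x + pf t y.
Proof. by move=> [D0 C L _] Dx Dy; have := L 1 x y Dx Dy; rewrite scale1r mul1r. Qed.

Definition extD (t : pext) (x : V) : set V :=
  [set z | exists y s, pD t y /\ z = y + s *: x].
Definition extf (t : pext) (x : V) (c : R) : V -> R := fun z =>
  xget 0 [set v | exists y s, [/\ pD t y, z = y + s *: x & v = pf t y + s * c]].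
Definition ext t x c := PExt (extD t x) (extf t x c).

Lemma ext_uniq t x y s y' s' : good t -> ~ pD t x -> pD t y -> pD t y' ->
  y + s *: x = y' + s' *: x -> s = s' /\ y = y'.
Proof.
move=> g nx Dy Dy' E.
have ss : s = s'.
  apply/eqP; apply/negP => /negP ne; apply: nx.
  have -> : x = (s - s')^-1 *: (y' - y).
    apply: (@scalerI _ _ (s - s')); first by rewrite subr_eq0.
    rewrite scalerA divff ?subr_eq0 // scale1r scalerBl.
    rewrite -[y'](addrK (s' *: x)) -E.
    by rewrite [RHS]addrAC [y + _]addrC addrK.
  case: (g) => D0 C _ _; have := C (s - s')^-1 (y' - y) 0 _ D0; rewrite addr0; apply.
  by apply: good_addD => //; apply: good_opp.
split=> //; subst s'.
by move/eqP: E; rewrite -subr_eq -addrA subrr addr0 => /eqP.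
Qed.

Lemma extf_val t x c y s : good t -> ~ pD t x -> pD t y ->
  extf t x c (y + s *: x) = pf t y + s * c.
Proof.
move=> g nx Dy; rewrite /extf; apply: xget_unique.
  by exists y, s.
move=> v [y' [s' [Dy' E ->]]].
by have [-> ->] := ext_uniq g nx Dy Dy' E.
Qed.

Lemma ext_good t x c : good t -> ~ pD t x ->
  (forall y, pD t y -> pf t y - p (y - x) <= c /\ c <= p (y + x) - pf t y) ->
  good (ext t x c).
Proof.
move=> g nx hc; have [D0 C L P] := g.
split => /=.
- by exists 0, 0; rewrite scale0r addr0.
- move=> a _ _ [y [s [Dy ->]]] [y' [s' [Dy' ->]]].
  exists (a *: y + y'), (a * s + s'); split; first exact: C.
  by rewrite scalerDr scalerDl scalerA; rewrite addrACA.
- move=> a _ _ [y [s [Dy ->]]] [y' [s' [Dy' ->]]].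
  have -> : a *: (y + s *: x) + (y' + s' *: x) = (a *: y + y') + (a * s + s') *: x.
    by rewrite scalerDr scalerDl scalerA addrACA.
  by rewrite !extf_val // ?L //; [ring | exact: C].
- move=> _ [y [s [Dy ->]]]; rewrite extf_val //.
  have [s0|s0|->] := ltrgtP s 0; last first.
  + by rewrite scale0r addr0 mul0r addr0; apply: P.
  + have Dy1 : pD t (s^-1 *: y) by have := C s^-1 y 0 Dy D0; rewrite addr0.
    have [_ h] := hc _ Dy1.
    rewrite good_scale // in h.
    have e : y + s *: x = s *: (s^-1 *: y + x).
      by rewrite scalerDr scalerA divff ?gt_eqF // scale1r.
    rewrite e p_hom //.
    have h2 := ler_wpM2l (ltW s0) h.
    rewrite mulrBr mulrA divff ?gt_eqF // mul1r in h2.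
    lra.
  + have Dy1 : pD t ((- s)^-1 *: y) by have := C (- s)^-1 y 0 Dy D0; rewrite addr0.
    have [h _] := hc _ Dy1.
    rewrite good_scale // in h.
    have e : y + s *: x = (- s) *: ((- s)^-1 *: y - x).
      by rewrite scalerDr scalerN scalerA divff ?oppr_eq0 ?lt_eqF // scale1r scaleNr opprK.
    have s1 : 0 < - s by rewrite oppr_gt0.
    rewrite e p_hom //.
    have h2 := ler_wpM2l (ltW s1) h.
    rewrite mulrBr mulrA divff ?gt_eqF // mul1r in h2.
    lra.
Qed.

Lemma ext_extends t x c : good t -> ~ pD t x -> extends t (ext t x c).
Proof.
move=> g nx; split => [y Dy|y Dy] /=.
  by exists y, 0; rewrite scale0r addr0.
by have := extf_val c 0 g nx Dy; rewrite scale0r addr0 mul0r addr0.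
Qed.

Lemma extends_refl t : extends t t.
Proof. by split. Qed.

Lemma extends_trans r s t : extends r s -> extends s t -> extends r t.
Proof.
move=> [rs1 rs2] [st1 st2]; split; first by move=> x /rs1 /st1.
by move=> x Dx; rewrite st2 ?rs2 //; exact: rs1.
Qed.

Section Zorn.
Variable t1 : pext.
Hypothesis g1 : good t1.

Definition ZT := {t : pext | good t /\ extends t1 t}.
Definition Rz (s t : ZT) : bool := `[< extends (sval s) (sval t) >].

Definition uD (A : set ZT) : set V := [set x | exists s, A s /\ pD (sval s) x].
Definition uf (A : set ZT) : V -> R := fun x =>
  xget 0 [set v | exists s, [/\ A s, pD (sval s) x & v = pf (sval s) x]].

Lemma uf_val A s x : total_on A Rz -> A s -> pD (sval s) x -> uf A x = pf (sval s) x.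
Proof.
move=> tot As Dx; apply: xget_unique; first by exists s.
move=> v [s' [As' Dx' ->]].
have [/asboolP [_ h]|/asboolP [_ h]] := tot _ _ As As'; first by rewrite h.
by rewrite h.
Qed.

Lemma u_common A x y : total_on A Rz -> uD A x -> uD A y ->
  exists r, [/\ A r, pD (sval r) x & pD (sval r) y].
Proof.
move=> tot [s [As Dx]] [s' [As' Dy]].
have [/asboolP [h _]|/asboolP [h _]] := tot _ _ As As'.
  by exists s'; split => //; exact: h.
by exists s; split => //; exact: h.
Qed.

Lemma u_good A : total_on A Rz -> A !=set0 -> good (PExt (uD A) (uf A)).
Proof.
move=> tot [s0 As0]; split => /=.
- by exists s0; split => //; case: (svalP s0) => [[]].
- move=> a x y Dx Dy; have [r [Ar Dxr Dyr]] := u_common tot Dx Dy.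
  by exists r; split => //; case: (svalP r) => [[_ C _ _] _]; apply: C.
- move=> a x y Dx Dy; have [r [Ar Dxr Dyr]] := u_common tot Dx Dy.
  have [[_ C L _] _] := svalP r.
  by rewrite !(uf_val tot Ar) //; [apply: L | apply: C].
- move=> x [s [As Dx]]; rewrite (uf_val tot As Dx).
  by have [[_ _ _ P] _] := svalP s; apply: P.
Qed.

Lemma u_ext1 A : total_on A Rz -> A !=set0 -> extends t1 (PExt (uD A) (uf A)).
Proof.
move=> tot [s0 As0]; have [_ [h1 h2]] := svalP s0; split => /=.
  by move=> x /h1 Dx; exists s0.
by move=> x Dx; rewrite (uf_val tot As0) ?h2 //; exact: h1.
Qed.

Lemma chain_ub (A : set ZT) : total_on A Rz -> exists t, forall s, A s -> Rz s t.
Proof.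
move=> tot; have [->|ne] := eqVneq A set0.
  by exists (exist _ t1 (conj g1 (extends_refl t1))).
have ne' : A !=set0 by apply/set0P.
exists (exist _ (PExt (uD A) (uf A)) (conj (u_good tot ne') (u_ext1 tot ne'))).
move=> s As; apply/asboolP; split => /=; first by move=> x Dx; exists s.
by move=> x Dx; rewrite (uf_val tot As).
Qed.

Lemma maximal_ext : exists t, [/\ good t, extends t1 t & forall x, pD t x].
Proof.
have [ts max] := @ZL_preorder ZT (exist _ t1 (conj g1 (extends_refl t1))) Rz
  (fun t => asboolT (extends_refl _))
  (fun r s t h1 h2 => asboolT (extends_trans (asboolW h1) (asboolW h2)))
  chain_ub.
case: ts max => t [gt et] /= max.
exists t; split => // x; apply: contrapT => nx.
have [D0 C L P] := gt.
pose S := [set pf t y - p (y - x) | y in pD t].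
have ub y : pD t y -> ubound S (p (y + x) - pf t y).
  move=> Dy _ [y1 Dy1 <-].
  have h1 := p_add (y1 - x) (y + x).
  have e : y1 - x + (y + x) = y1 + y by rewrite addrACA addNr addr0.
  rewrite e in h1.
  have h2 : pf t (y1 + y) <= p (y1 + y) by apply: P; apply: good_addD.
  rewrite good_add // in h2.
  lra.
have hS : has_sup S.
  split; first by exists (pf t 0 - p (0 - x)), 0.
  by exists (p (0 + x) - pf t 0); apply: ub.
pose c := sup S.
have hc y : pD t y -> pf t y - p (y - x) <= c /\ c <= p (y + x) - pf t y.
  move=> Dy; split; first by apply: sup_upper_bound => //; exists y.
  by apply: ge_sup; [case: hS | apply: ub].
have ge := ext_good gt nx hc.
have ee := ext_extends c gt nx.
have := max (exist _ (ext t x c) (conj ge (extends_trans et ee))) (asboolT ee).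
move=> /asboolW [/= h _]; apply: nx; apply: h.
by exists 0, 1; rewrite scale1r add0r.
Qed.
End Zorn.

Theorem HB_ext (v0 : V) : (forall x, 0 <= p x) -> 1 <= p v0 ->
  exists F : V -> R, [/\ forall a x y, F (a *: x + y) = a * F x + F y,
     forall x, F x <= p x & F v0 = 1].
Proof.
move=> p0 pv0.
pose t0 := PExt [set 0] (fun _ => 0).
have g0 : good t0.
  split; rewrite /=.
  - by [].
  - by move=> a x y -> ->; rewrite scaler0 addr0.
  - by move=> a x y _ _; rewrite mulr0 addr0.
  - by move=> x _; exact: p0.
have nv0 : ~ pD t0 v0.
  move=> /= e; move: pv0; rewrite e.
  have h2 : (0:R) < 2 by lra.
  have := p_hom 0 h2; rewrite scaler0 => h hp; clear e; lra.
have hc y : pD t0 y -> pf t0 y - p (y - v0) <= 1 /\ 1 <= p (y + v0) - pf t0 y.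
  move=> /= ->; rewrite /= add0r; have := p0 (0 - v0).
  by move=> h; split; [lra | rewrite add0r subr0].
have g1 := ext_good g0 nv0 hc.
have [t [gt [et1 et2] all]] := maximal_ext g1.
exists (pf t); split.
- by move=> a x y; case: gt => _ _ L _; apply: L.
- by move=> x; case: gt => _ _ _ P; apply: P.
- have D1 : pD (ext t0 v0 1) v0 by exists 0, 1; rewrite scale1r add0r.
  rewrite et2 //=.
  have := extf_val 1 1 g0 nv0 (erefl : pD t0 0).
  by rewrite scale1r add0r /= mulr1 add0r.
Qed.
End HBsec.
Lemma zid (V : zmodType) (b a x y : V) : b - (x + (a - y)) = b - a - (x - y).
Proof.
rewrite opprD opprB opprB addrA -[in RHS]addrA [- a + _]addrC addrA.
by rewrite !addrA (addrAC b).
Qed.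

Section Sep.
Context {R : realType} {V : lmodType R} (N : V -> R).
Hypothesis N_ge0 : forall x, 0 <= N x.
Hypothesis N_add : forall x y, N (x + y) <= N x + N y.
Hypothesis N_scale : forall (a : R) x, N (a *: x) = `|a| * N x.
Variables (C : set V) (a b : V) (r : R).
Hypothesis Cconv : forall c1 c2 (t : R), 0 <= t -> t <= 1 -> C c1 -> C c2 ->
  C (t *: c1 + (1 - t) *: c2).
Hypothesis r0 : 0 < r.
Hypothesis Ca : C a.
Hypothesis far : forall c, C c -> r <= N (b - c).

Definition Sx (x : V) := [set v | exists l c, [/\ 0 <= l, C c & v = l + N (x - l *: (c - a)) / r]].
Definition pg x := inf (Sx x).

Lemma N0 : N 0 = 0.
Proof. by have := N_scale 0 0; rewrite scaler0 normr0 mul0r. Qed.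

Lemma Sx_ge0 x v : Sx x v -> 0 <= v.
Proof.
move=> [l [c [l0 _ ->]]]; apply: addr_ge0 => //.
by apply: divr_ge0 => //; apply: ltW.
Qed.

Lemma Sx_ne x : Sx x !=set0.
Proof. by exists (0 + N (x - 0 *: (a - a)) / r), 0, a. Qed.

Lemma Sx_lb x : has_lbound (Sx x).
Proof. by exists 0 => v /Sx_ge0. Qed.

Lemma pg_le x v : Sx x v -> pg x <= v.
Proof. by move=> Sv; apply: (ge_inf (Sx_lb x)). Qed.

Lemma pg_ge0 x : 0 <= pg x.
Proof. by apply: lb_le_inf; [exact: Sx_ne | move=> v /Sx_ge0]. Qed.

Lemma pg_N x : pg x <= N x / r.
Proof.
by apply: pg_le; exists 0, a; split => //; rewrite scale0r subr0 add0r.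
Qed.

Lemma pg_C c : C c -> pg (c - a) <= 1.
Proof.
move=> Cc; apply: pg_le; exists 1, c; split => //.
by rewrite scale1r subrr N0 mul0r addr0.
Qed.

Lemma pg_add x y : pg (x + y) <= pg x + pg y.
Proof.
have core e1 e2 : Sx x e1 -> Sx y e2 -> pg (x + y) <= e1 + e2.
  move=> [l1 [c1 [l10 C1 ->]]] [l2 [c2 [l20 C2 ->]]].
  have [c [Cc ec]] : exists c, C c /\ (l1 + l2) *: (c - a) = l1 *: (c1 - a) + l2 *: (c2 - a).
    have [l0|lp] := eqVneq (l1 + l2) 0.
      have f1 : l1 = 0 by lra.
      have f2 : l2 = 0 by lra.
      by exists a; rewrite l0 f1 f2 !scale0r addr0.
    have lpos : 0 < l1 + l2 by rewrite lt_neqAle eq_sym lp addr_ge0.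
    pose t := l1 / (l1 + l2).
    have t0 : 0 <= t by apply: divr_ge0 => //; apply: ltW.
    have t1 : t <= 1 by rewrite /t ler_pdivrMr // mul1r lerDl.
    exists (t *: c1 + (1 - t) *: c2); split; first exact: Cconv.
    have h1 : (l1 + l2) * t = l1 by rewrite /t mulrC -mulrA mulVf ?mulr1.
    have h2 : (l1 + l2) * (1 - t) = l2 by rewrite mulrBr mulr1 h1; ring.
    rewrite !scalerBr scalerDr !scalerA h1 h2 scalerDl.
    by rewrite opprD addrACA.
  apply: (@le_trans _ _ ((l1 + l2) + N (x + y - (l1 + l2) *: (c - a))/r)).
    by apply: pg_le; exists (l1 + l2), c; split => //; apply: addr_ge0.
  rewrite ec.
  have -> : x + y - (l1 *: (c1 - a) + l2 *: (c2 - a)) =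
      (x - l1 *: (c1 - a)) + (y - l2 *: (c2 - a)) by rewrite opprD addrACA.
  have h := N_add (x - l1 *: (c1 - a)) (y - l2 *: (c2 - a)).
  have hr : 0 <= r^-1 by rewrite invr_ge0 ltW.
  have := ler_wpM2r hr h; rewrite mulrDl => h'.
  lra.
have h1 e2 : Sx y e2 -> pg (x + y) - e2 <= pg x.
  move=> S2; apply: lb_le_inf; first exact: Sx_ne.
  by move=> e1 S1; have := core _ _ S1 S2; lra.
have h2 : pg (x + y) - pg x <= pg y.
  apply: lb_le_inf; first exact: Sx_ne.
  by move=> e2 S2; have := h1 _ S2; lra.
lra.
Qed.

Lemma pg_hom_le (m : R) x : 0 < m -> pg (m *: x) <= m * pg x.
Proof.
move=> m0.
suff : pg (m *: x) / m <= pg x.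
  by rewrite ler_pdivrMr // mulrC.
apply: lb_le_inf; first exact: Sx_ne.
move=> e [l [c [l0 Cc ->]]].
rewrite ler_pdivrMr //.
apply: (@le_trans _ _ (m * l + N (m *: x - (m * l) *: (c - a)) / r)).
  by apply: pg_le; exists (m * l), c; split => //; apply: mulr_ge0 => //; apply: ltW.
rewrite -scalerA -scalerBr N_scale gtr0_norm //.
by rewrite mulrDl; apply: lerD; rewrite ?[l * m]mulrC // -mulrA mulrC.
Qed.

Lemma pg_hom (m : R) x : 0 < m -> pg (m *: x) = m * pg x.
Proof.
move=> m0; apply/eqP; rewrite eq_le pg_hom_le //=.
have mi : 0 < m^-1 by rewrite invr_gt0.
have := pg_hom_le (m *: x) mi; rewrite scalerA mulVf ?gt_eqF // scale1r.
move=> h; have := ler_wpM2l (ltW m0) h.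
by rewrite mulrA divff ?gt_eqF // mul1r.
Qed.

Lemma pg_ba : 1 <= pg (b - a).
Proof.
apply: lb_le_inf; first exact: Sx_ne.
move=> e [l [c [l0 Cc ->]]].
have [l1|l1] := leP l 1; last first.
  have := N_ge0 (b - a - l *: (c - a)).
  have hr : 0 <= r^-1 by rewrite invr_ge0 ltW.
  move=> h; have := mulr_ge0 h hr; lra.
have Cc' := Cconv l0 l1 Cc Ca.
have := far Cc'.
have -> : b - (l *: c + (1 - l) *: a) = b - a - l *: (c - a).
  by rewrite scalerBl scale1r scalerBr zid.
move=> h.
have : 1 <= N (b - a - l *: (c - a)) / r by rewrite ler_pdivlMr // mul1r.
lra.
Qed.

Theorem separate : exists F : V -> R,
  [/\ forall (a0 : R) x y, F (a0 *: x + y) = a0 * F x + F y,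
     forall x, F x <= N x / r,
     forall c, C c -> F (c - a) <= 1 & F (b - a) = 1].
Proof.
have [F [L P F1]] := HB_ext pg_add pg_hom pg_ge0 pg_ba.
exists F; split => //.
- by move=> x; apply: le_trans (P x) (pg_N x).
- by move=> c Cc; apply: le_trans (P _) (pg_C Cc).
Qed.
End Sep.

Section Lin.
Context {R : realType} {U : lmodType R} (f : U -> R).
Hypothesis L : forall a x y, f (a *: x + y) = a * f x + f y.

Lemma lin0 : f 0 = 0.
Proof. by have := L 1 0 0; rewrite scale1r addr0 mul1r => h; lra. Qed.
Lemma linZ a x : f (a *: x) = a * f x.
Proof. by have := L a x 0; rewrite addr0 lin0 addr0. Qed.
Lemma linD x y : f (x + y) = f x + f y.
Proof. by have := L 1 x y; rewrite scale1r mul1r. Qed.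
Lemma linN x : f (- x) = - f x.
Proof. by rewrite -scaleN1r linZ mulN1r. Qed.
Lemma linB x y : f (x - y) = f x - f y.
Proof. by rewrite linD linN. Qed.
Lemma lin_sum n (c : 'I_n -> R) (v : 'I_n -> U) :
  f (\sum_(i < n) c i *: v i) = \sum_(i < n) c i * f (v i).
Proof.
apply: (big_ind2 (fun x y => f x = y)); first exact: lin0.
  by move=> x1 x2 y1 y2 <- <-; rewrite linD.
by move=> i _; rewrite linZ.
Qed.
End Lin.

Section Conv.
Context {R : realType}.

Definition cw n1 n2 (w1 : 'I_n1 -> R) (w2 : 'I_n2 -> R) (t : R) : 'I_(n1 + n2) -> R :=
  fun i => match fintype.split i with inl j => t * w1 j | inr k => (1 - t) * w2 k end.
Definition ca (A : Type) n1 n2 (a1 : 'I_n1 -> A) (a2 : 'I_n2 -> A) : 'I_(n1 + n2) -> A :=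
  fun i => match fintype.split i with inl j => a1 j | inr k => a2 k end.

Lemma sl n1 n2 (j : 'I_n1) : fintype.split (lshift n2 j) = inl j.
Proof. exact: (unsplitK (inl _)). Qed.
Lemma sr n1 n2 (j : 'I_n2) : fintype.split (rshift n1 j) = inr j.
Proof. exact: (unsplitK (inr _)). Qed.

Lemma cw_l n1 n2 w1 w2 t j : @cw n1 n2 w1 w2 t (lshift n2 j) = t * w1 j.
Proof. by rewrite /cw sl. Qed.
Lemma cw_r n1 n2 w1 w2 t j : @cw n1 n2 w1 w2 t (rshift n1 j) = (1 - t) * w2 j.
Proof. by rewrite /cw sr. Qed.
Lemma ca_l A n1 n2 a1 a2 j : @ca A n1 n2 a1 a2 (lshift n2 j) = a1 j.
Proof. by rewrite /ca sl. Qed.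
Lemma ca_r A n1 n2 a1 a2 j : @ca A n1 n2 a1 a2 (rshift n1 j) = a2 j.
Proof. by rewrite /ca sr. Qed.

Lemma cw_props n1 n2 (w1 : 'I_n1 -> R) (w2 : 'I_n2 -> R) t :
  0 <= t -> t <= 1 -> (forall i, 0 <= w1 i) -> (forall i, 0 <= w2 i) ->
  \sum_(i < n1) w1 i = 1 -> \sum_(i < n2) w2 i = 1 ->
  (forall i, 0 <= cw w1 w2 t i) /\ \sum_(i < n1 + n2) cw w1 w2 t i = 1.
Proof.
move=> t0 t1 p1 p2 s1 s2; split.
  move=> i; rewrite /cw; case: fintype.split => j; apply: mulr_ge0 => //; lra.
rewrite big_split_ord.
have -> : \sum_(j < n1) cw w1 w2 t (lshift n2 j) = t * \sum_(j < n1) w1 j.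
  by rewrite mulr_sumr; apply: eq_bigr => j _; rewrite cw_l.
have -> : \sum_(j < n2) cw w1 w2 t (rshift n1 j) = (1 - t) * \sum_(j < n2) w2 j.
  by rewrite mulr_sumr; apply: eq_bigr => j _; rewrite cw_r.
rewrite s1 s2 !mulr1; change (t + (1 - t) = 1); lra.
Qed.

Lemma ca_in (A : Type) (P : A -> Prop) n1 n2 (a1 : 'I_n1 -> A) (a2 : 'I_n2 -> A) :
  (forall i, P (a1 i)) -> (forall i, P (a2 i)) -> forall i, P (ca a1 a2 i).
Proof. by move=> h1 h2 i; rewrite /ca; case: fintype.split. Qed.
End Conv.

Section ConvX.
Context {R : realType} {X : normedModType R}.

Lemma conv_hull_single (A : set X) x : A x -> conv_hull A x.
Proof.
move=> Ax; exists 1%N, (fun _ => 1), (fun _ => x); split => //.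
- by rewrite big_ord1.
- by rewrite big_ord1 scale1r.
Qed.

Lemma conv_hull_convex (A : set X) c1 c2 (t : R) : 0 <= t -> t <= 1 ->
  conv_hull A c1 -> conv_hull A c2 -> conv_hull A (t *: c1 + (1 - t) *: c2).
Proof.
move=> t0 t1 [n1 [w1 [a1 [p1 s1 A1 ->]]]] [n2 [w2 [a2 [p2 s2 A2 ->]]]].
have [cp cs] := cw_props t0 t1 p1 p2 s1 s2.
exists (n1 + n2)%N, (cw w1 w2 t), (ca a1 a2); split => //.
  exact: ca_in.
rewrite big_split_ord !scaler_sumr; congr (_ + _); apply: eq_bigr => j _.
  by rewrite cw_l ca_l scalerA.
by rewrite cw_r ca_r scalerA.
Qed.

Lemma conv_dual_single (A : set (X -> R)) x : A x -> conv_dual A x.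
Proof.
move=> Ax; exists 1%N, (fun _ => 1), (fun _ => x); split => //.
- by rewrite big_ord1.
- by apply: funext => z; rewrite big_ord1 mul1r.
Qed.

Lemma conv_dual_convex (A : set (X -> R)) c1 c2 (t : R) : 0 <= t -> t <= 1 ->
  conv_dual A c1 -> conv_dual A c2 ->
  conv_dual A (fun z => t * c1 z + (1 - t) * c2 z).
Proof.
move=> t0 t1 [n1 [w1 [a1 [p1 s1 A1 ->]]]] [n2 [w2 [a2 [p2 s2 A2 ->]]]].
have [cp cs] := cw_props t0 t1 p1 p2 s1 s2.
exists (n1 + n2)%N, (cw w1 w2 t), (ca a1 a2); split => //.
  exact: ca_in.
apply: funext => z; rewrite big_split_ord !mulr_sumr; congr (_ + _); apply: eq_bigr => j _.
  by rewrite cw_l ca_l mulrA.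
by rewrite cw_r ca_r mulrA.
Qed.
End ConvX.

Section Key.
Context {R : realType} {X : normedModType R} (T : set (X * (X -> R))).

Lemma dual_comb (g u : X -> R) (l : R) : dual_elt g -> dual_elt u ->
  dual_elt (fun w => g w + l * u w).
Proof.
move=> [Lg cg] [Lu cu]; split.
  by move=> a x y; rewrite Lg Lu; ring.
move=> x; exact: (continuousD (cg x) (continuousM (@cst_continuous _ _ l x) (cu x))).
Qed.

Lemma dual0 : dual_elt (fun _ : X => (0 : R)).
Proof.
split; first by move=> *; rewrite mulr0 addr0.
by move=> x; apply: cst_continuous.
Qed.

Lemma T_nonempty : maximal_monotone T -> exists p, T p.
Proof.
move=> [opT monT maxT]; apply: contrapT => ne.
pose S := [set ((0 : X), fun _ : X => (0 : R))].
have opS : is_operator S by move=> p ->; exact: dual0.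
have monS : monotone_op S by move=> p q -> ->; rewrite /= subrr.
have TS : T `<=` S by move=> p Tp; exfalso; apply: ne; exists p.
have := maxT S opS monS TS => ST.
by apply: ne; exists (0, fun _ => 0); rewrite -ST.
Qed.

Lemma key (u : X -> R) (z : X) (M s : R) : maximal_monotone T -> dual_elt u ->
  (forall x, dom_op T x -> u x <= M) -> (forall f, ran_op T f -> f z <= s) ->
  u z <= 0.
Proof.
move=> mT du hM hs.
have [[x0 g0] T0] := T_nonempty mT.
case: mT => opT monT maxT.
rewrite leNgt; apply/negP => k0.
pose K := `|s| + `|g0 z| + `|M| + `|u x0|.
have K0 : 0 <= K by rewrite /K !addr_ge0.
pose l := (K + 1) / u z.
have l0 : 0 < l by apply: divr_gt0 => //; lra.
have lk : l * u z = K + 1 by rewrite /l mulrAC -mulrA divff ?gt_eqF // mulr1.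
pose P := (x0 + l *: z, fun w => g0 w + l * u w).
pose S := T `|` [set P].
have dg0 : dual_elt g0 := opT _ T0.
have dP : dual_elt P.2 by apply: dual_comb.
have [Lu _] := du.
have [Lg _] := dg0.
have opS : is_operator S by move=> q [/opT // | ->].
have cross x f : T (x, f) -> 0 <= f (x - P.1) - P.2 (x - P.1).
  move=> Txf; have [Lf _] : dual_elt f := opT _ Txf.
  have m := monT _ _ Txf T0; rewrite /= in m.
  have fz := hs f (ex_intro _ x Txf).
  have ux := hM x (ex_intro _ f Txf).
  have e : x - P.1 = (x - x0) + (- l) *: z by rewrite /= opprD addrA scaleNr.
  rewrite e /= (linD Lf) (linD Lg) (linD Lu) !(linZ Lf) !(linZ Lg) !(linZ Lu).
  rewrite (linB Lu).
  have h1 := ler_wpM2l (ltW l0) fz.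
  have h2 := ler_wpM2l (ltW l0) ux.
  have hK : s - g0 z + M - u x0 <= K.
    rewrite /K; have := ler_norm s; have := ler_norm M.
    have := ler_norm (- g0 z); have := ler_norm (- u x0); rewrite !normrN; lra.
  have h3 := ler_wpM2l (ltW l0) hK.
  have h4 : l * (l * u z) = l * (K + 1) by rewrite lk.
  nra.
have monS : monotone_op S.
  move=> p q [Tp|->] [Tq|->].
  - exact: monT.
  - by case: p Tp => x f Tp; exact: cross.
  - case: q Tq => x f Tq; have := cross _ _ Tq.
    have [Lf _] : dual_elt f := opT _ Tq.
    have e : P.1 - x = - (x - P.1) by rewrite opprB.
    move=> c; change (0 <= P.2 (P.1 - x) - f (P.1 - x)).
    by rewrite e (linN Lf) (linN (dP.1)); lra.
  - by rewrite subrr.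
have ST := maxT S opS monS (fun p Tp => or_introl Tp).
have TP : T P by rewrite -ST; right.
have := hM _ (ex_intro _ P.2 TP); rewrite /= (linD Lu) (linZ Lu) lk.
rewrite /K; have := ler_norm M; have := ler_norm (- u x0); rewrite normrN.
have := normr_ge0 s; have := normr_ge0 (g0 z).
lra.
Qed.
End Key.

Section Part2.
Context {R : realType} {X : normedModType R} (T : set (X * (X -> R))).

Lemma bounded_cont (F : X -> R) (e : R) : 0 < e ->
  (forall a x y, F (a *: x + y) = a * F x + F y) ->
  (forall x, F x <= `|x| / e) -> continuous F.
Proof.
move=> e0 LF FN x; apply/cvgrPdist_lt => eps eps0.
apply/nbhs_ballP; exists (e * eps); first exact: mulr_gt0.
move=> t; rewrite -ball_normE /ball_ /= => bt.
rewrite -(linB LF).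
have h1 := FN (x - t); have h2 := FN (- (x - t)).
rewrite (linN LF) normrN in h2.
have : `|x - t| / e < eps by rewrite ltr_pdivrMr // mulrC.
have : `|F (x - t)| <= `|x - t| / e by rewrite ler_norml; apply/andP; split; lra.
lra.
Qed.

Lemma part2_core (u : X) (s : R) (h : X) (l e : R) : maximal_monotone T ->
  (forall f, ran_op T f -> f u <= s) -> conv_hull (dom_op T) h -> 0 <= l -> 0 < e ->
  exists c, conv_hull (dom_op T) c /\ `|h + l *: u - c| < e.
Proof.
move=> mT hs Ch l0 e0; apply: contrapT => nc.
have far c : conv_hull (dom_op T) c -> e <= `|h + l *: u - c|.
  move=> Cc; rewrite leNgt; apply/negP => lt; apply: nc; exists c; split => //.
have [F [LF FN FC F1]] := separate (N := fun x : X => `|x|) (@normr_ge0 _ _) (@ler_normD _ _)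
  (@normrZ _ _) (C := conv_hull (dom_op T)) (@conv_hull_convex _ _ _) e0 Ch far.
have dF : dual_elt F by split => //; exact: bounded_cont e0 LF FN.
have := key (M := 1 + F h) mT dF _ hs.
have e1 : h + l *: u - h = l *: u by rewrite addrC addKr.
rewrite e1 (linZ LF) in F1.
move=> k.
have : F u <= 0.
  apply: k => x Dx; have := FC _ (conv_hull_single Dx); rewrite (linB LF); lra.
move=> Fu; nra.
Qed.

Lemma ran_bound (u : X) : maximal_monotone T -> (supp_ran T u < +oo)%E ->
  exists s, forall f, ran_op T f -> f u <= s.
Proof.
move=> mT; rewrite /supp_ran.
set S := [set (f u)%:E | f in ran_op T].
case E : (ereal_sup S) => [r| |] // _.
  exists r => f rf; have : ((f u)%:E <= ereal_sup S)%E by apply: ereal_sup_ubound; exists f.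
  by rewrite E lee_fin.
exists 0 => f rf; have : ((f u)%:E <= ereal_sup S)%E by apply: ereal_sup_ubound; exists f.
by rewrite E.
Qed.

Lemma part2 (u : X) : maximal_monotone T -> (supp_ran T u < +oo)%E ->
  rec_cone (norm_closure (conv_hull (dom_op T))) u.
Proof.
move=> mT su; have [s hs] := ran_bound mT su.
move=> x cx l l0 B /nbhs_ballP [e e0 sub].
have e20 : 0 < e / 2 by apply: divr_gt0.
have [h [Ch bh]] := cx _ (nbhsx_ballx x _ e20).
have [c [Cc hc]] := part2_core mT hs Ch l0 e20.
exists c; split => //; apply: sub.
rewrite -ball_normE /ball_ /=.
move: bh; rewrite -ball_normE /ball_ /= => bh.
have -> : x + l *: u - c = (x - h) + (h + l *: u - c) by rewrite !addrA subrK.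
apply: (le_lt_trans (ler_normD _ _)); lra.
Qed.
End Part2.

Section Part1.
Context {R : realType} {X : normedModType R} (T : set (X * (X -> R))).

Definition Ev n (xs : 'I_n -> X) (g : X -> R) : 'rV[R]_n := \row_i g (xs i).
Definition N1 n (v : 'rV[R]_n) : R := \sum_(i < n) `|v 0 i|.

Lemma N1_ge0 n (v : 'rV[R]_n) : 0 <= N1 v.
Proof. by apply: sumr_ge0 => i _. Qed.

Lemma N1_add n (v w : 'rV[R]_n) : N1 (v + w) <= N1 v + N1 w.
Proof.
rewrite /N1 -big_split /=; apply: ler_sum => i _; rewrite mxE; exact: ler_normD.
Qed.

Lemma N1_scale n (a : R) (v : 'rV[R]_n) : N1 (a *: v) = `|a| * N1 v.
Proof. by rewrite /N1 mulr_sumr; apply: eq_bigr => i _; rewrite mxE normrM. Qed.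

Lemma N1_coord n (v : 'rV[R]_n) i : `|v 0 i| <= N1 v.
Proof.
rewrite /N1 (bigD1 i) //= lerDl; by apply: sumr_ge0 => j _.
Qed.

Lemma Ev_dual n (xs : 'I_n -> X) (F : 'rV[R]_n -> R) (g : X -> R) :
  (forall a x y, F (a *: x + y) = a * F x + F y) ->
  (forall a x y, g (a *: x + y) = a * g x + g y) ->
  g (\sum_(i < n) F (delta_mx 0 i) *: xs i) = F (Ev xs g).
Proof.
move=> LF Lg; rewrite (lin_sum Lg) [Ev xs g]row_sum_delta (lin_sum LF).
by apply: eq_bigr => i _; rewrite mxE mulrC.
Qed.

Lemma part1_core n (xs : 'I_n -> X) (u : X -> R) (M : R) (h : X -> R) (l e : R) :
  maximal_monotone T -> dual_elt u -> (forall x, dom_op T x -> u x <= M) ->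
  conv_dual (ran_op T) h -> 0 <= l -> 0 < e ->
  exists g, conv_dual (ran_op T) g /\
    forall i, `|g (xs i) - (h (xs i) + l * u (xs i))| < e.
Proof.
move=> mT du hM Ch l0 e0; apply: contrapT => nc.
pose C := [set v | exists g, conv_dual (ran_op T) g /\ v = Ev xs g].
pose b := Ev xs h + l *: Ev xs u.
have far c : C c -> e <= N1 (b - c).
  move=> [g [Cg ->]].
  have [i hi] : exists i, ~ (`|g (xs i) - (h (xs i) + l * u (xs i))| < e).
    apply: contrapT => ni; apply: nc; exists g; split => // i.
    by apply: contrapT => hi; apply: ni; exists i.
  apply: le_trans (N1_coord _ i); rewrite !mxE distrC.
  by rewrite leNgt; apply/negP.
have Cconv c1 c2 (t : R) : 0 <= t -> t <= 1 -> C c1 -> C c2 ->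
    C (t *: c1 + (1 - t) *: c2).
  move=> t0 t1 [g1 [C1 ->]] [g2 [C2 ->]].
  exists (fun z => t * g1 z + (1 - t) * g2 z); split; first exact: conv_dual_convex.
  by apply/rowP => i; rewrite !mxE.
have Ca : C (Ev xs h) by exists h.
have [F [LF _ FC F1]] := separate (N := @N1 n) (@N1_ge0 n) (@N1_add n) (@N1_scale n)
  Cconv e0 Ca far.
pose z := \sum_(i < n) F (delta_mx 0 i) *: xs i.
have [opT _ _] := mT.
have hs f : ran_op T f -> f z <= 1 + F (Ev xs h).
  move=> [x Txf]; have [Lf _] : dual_elt f := opT _ Txf.
  rewrite /z (Ev_dual _ LF Lf).
  have := FC (Ev xs f) (ex_intro _ f (conj (conv_dual_single (ex_intro _ x Txf)) erefl)).
  rewrite (linB LF); lra.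
have := key mT du hM hs.
have [Lu _] := du.
rewrite /z (Ev_dual _ LF Lu).
have e1 : b - Ev xs h = l *: Ev xs u by rewrite /b addrC addKr.
rewrite e1 (linZ LF) in F1.
move=> k; nra.
Qed.

Lemma dom_bound (u : X -> R) : (supp_dom T u < +oo)%E ->
  exists M, forall x, dom_op T x -> u x <= M.
Proof.
rewrite /supp_dom.
set S := [set (u x)%:E | x in dom_op T].
case E : (ereal_sup S) => [r| |] // _.
  exists r => x dx; have : ((u x)%:E <= ereal_sup S)%E by apply: ereal_sup_ubound; exists x.
  by rewrite E lee_fin.
exists 0 => x dx; have : ((u x)%:E <= ereal_sup S)%E by apply: ereal_sup_ubound; exists x.
by rewrite E.
Qed.

Lemma part1 (u : X -> R) : maximal_monotone T -> dual_elt u -> (supp_dom T u < +oo)%E ->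
  rec_cone_dual (wstar_closure (conv_dual (ran_op T))) u.
Proof.
move=> mT du su; have [M hM] := dom_bound su.
move=> x [dx cx] l l0; split; first exact: dual_comb.
move=> n xs e e0.
have e20 : 0 < e / 2 by apply: divr_gt0.
have [h [Ch hh]] := cx n xs _ e20.
have [g [Cg hg]] := part1_core xs mT du hM Ch l0 e20.
exists g; split => // i /=.
have -> : g (xs i) - (x (xs i) + l * u (xs i)) =
  (g (xs i) - (h (xs i) + l * u (xs i))) + (h (xs i) - x (xs i)) by ring.
apply: (le_lt_trans (ler_normD _ _)); have := hg i; have := hh i; lra.
Qed.
End Part1.

Theorem lemma4p2 (R : realType) (X : completeNormedModType R)
    (T : set (X * (X -> R))) :
  maximal_monotone T ->
  ([set u | dual_elt u /\ (supp_dom T u < +oo)%E]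
     `<=` rec_cone_dual (wstar_closure (conv_dual (ran_op T)))) /\
  ([set u : X | (supp_ran T u < +oo)%E]
     `<=` rec_cone (norm_closure (conv_hull (dom_op T)))).
Proof.
move=> mT; split.
  by move=> u [du su]; exact: part1.
by move=> u su; exact: part2.
Qed.
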